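(* Let $\mathcal{R}$ be a 2-torsion free unital prime ring containing a nontrivial idempotent $P$ (i.e. $P^2=P$, $P\neq0$, $P\neq I$). If $\phi:\mathcal{R}\to\mathcal{R}$ is an additive mapping such that $\phi(A)\circ B+A\circ\phi(B)=0$ for all $A,B\in\mathcal{R}$ with $AB=BA=0$, then there exist a derivation $\delta:\mathcal{R}\to\mathcal{R}$ and a multiplier $\eta:\mathcal{R}\to\mathcal{R}$ such that $\phi=\delta+\eta$. If moreover $\phi(I)=0$, then $\phi$ is a derivation.
   Context: A ring $\mathcal{R}$ is prime if $A\mathcal{R}B=\{0\}$ implies $A=0$ or $B=0$. 2-torsion free: $2X=0\Rightarrow X=0$. $X\circ Y=XY+YX$. An additive $\delta$ is a derivation if $\delta(XY)=\delta(X)Y+X\delta(Y)$; an additive $\eta$ is a multiplier if $\eta(X)=\eta(I)X=X\eta(I)$ for all $X$. *)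

(* Defs.v *)
From HB Require Import structures.
From mathcomp Require Import all_boot all_order all_algebra.
Set Implicit Arguments. Unset Strict Implicit. Unset Printing Implicit Defensive.
Import GRing.Theory.
Local Open Scope ring_scope.

Definition jprod (R : nzRingType) (X Y : R) : R := X * Y + Y * X.

Definition additive_map (R : nzRingType) (f : R -> R) : Prop :=
  forall X Y : R, f (X + Y) = f X + f Y.

Definition prime_ring (R : nzRingType) : Prop :=
  forall A B : R, (forall X : R, A * X * B = 0) -> A = 0 \/ B = 0.

Definition two_torsion_free (R : nzRingType) : Prop :=
  forall X : R, X *+ 2 = 0 -> X = 0.

Definition is_derivation (R : nzRingType) (d : R -> R) : Prop :=
  additive_map d /\ forall X Y : R, d (X * Y) = d X * Y + X * d Y.

Definition is_multiplier (R : nzRingType) (e : R -> R) : Prop :=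
  additive_map e /\ forall X : R, e X = e 1 * X /\ e X = X * e 1.

(* Main.v *)
Require Import Defs.
From HB Require Import structures.
From mathcomp Require Import all_boot all_order all_algebra.
Import GRing.Theory.
Local Open Scope ring_scope.
Set Implicit Arguments. Unset Strict Implicit.

Inductive aexp := AVar of nat | AAdd of aexp & aexp | AOpp of aexp | AZero.

Fixpoint aeval {V : zmodType} (env : seq V) (e : aexp) : V :=
  match e with
  | AVar n => nth 0 env n
  | AAdd a b => aeval env a + aeval env b
  | AOpp a => - aeval env a
  | AZero => 0
  end.

Fixpoint acoef (e : aexp) (n : nat) : int :=
  match e with
  | AVar m => if m == n then 1 else 0
  | AAdd a b => acoef a n + acoef b n
  | AOpp a => - acoef a n
  | AZero => 0
  end.

Lemma aeval_sum (V : zmodType) (env : seq V) e N : (size env <= N)%N ->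
  aeval env e = \sum_(i < N) (env`_i *~ acoef e i).
Proof.
move=> hN; elim: e => [m|a iha b ihb|a iha|] /=.
- case: (ltnP m N) => hm.
  + rewrite (bigD1 (Ordinal hm)) //= eqxx mulr1z big1 ?addr0 // => i hi.
    case: eqP => [hmi|]; last by rewrite mulr0z.
    by move: hi; rewrite -val_eqE /= hmi eqxx.
  + rewrite nth_default ?(leq_trans hN hm) // big1 // => i _.
    case: eqP => [hmi|]; last by rewrite mulr0z.
    by move: (ltn_ord i); rewrite -hmi ltnNge hm.
- by rewrite iha ihb -big_split /=; apply: eq_bigr => i _; rewrite mulrzDr.
- by rewrite iha -sumrN; apply: eq_bigr => i _; rewrite mulrNz.
- by rewrite big1 // => i _; rewrite mulr0z.
Qed.

Definition acoefs e N := map (acoef e) (iota 0 N).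

Lemma aeval_eq (V : zmodType) (env : seq V) e1 e2 N : (size env <= N)%N ->
  acoefs e1 N == acoefs e2 N -> aeval env e1 = aeval env e2.
Proof.
move=> hN /eqP h; rewrite (aeval_sum e1 hN) (aeval_sum e2 hN); apply: eq_bigr => i _.
have := congr1 (fun s => nth 0 s i) h.
by rewrite /acoefs !(nth_map 0%N) ?size_iota // nth_iota // add0n => ->.
Qed.

Ltac index_of t env :=
  match env with
  | (?x :: _) => constr:((ltac:(unify x t; exact 0%nat)) : nat)
  | (_ :: ?rest) => let k := index_of t rest in constr:(S k)
  end.

Ltac add_atom t env :=
  match env with
  | nil => constr:(t :: nil)
  | (?x :: _) => let _ := constr:((ltac:(unify x t; exact 0%nat)) : nat) in env
  | (?x :: ?rest) => let r := add_atom t rest in constr:(x :: r)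
  end.

Ltac collect t env :=
  lazymatch t with
  | @GRing.add _ ?a ?b => let env1 := collect a env in collect b env1
  | @GRing.opp _ ?a => collect a env
  | @GRing.zero _ => env
  | _ => add_atom t env
  end.

Ltac reify t env :=
  lazymatch t with
  | @GRing.add _ ?a ?b => let x := reify a env in let y := reify b env in constr:(AAdd x y)
  | @GRing.opp _ ?a => let x := reify a env in constr:(AOpp x)
  | @GRing.zero _ => constr:(AZero)
  | _ => let n := index_of t env in constr:(AVar n)
  end.

Ltac acsolve :=
  lazymatch goal with
  | |- @eq ?T ?l ?r =>
    let env0 := collect l (@nil T) in
    let env := collect r env0 in
    let el := reify l env in
    let er := reify r env in
    change (aeval env el = aeval env er);
    apply: (@aeval_eq _ env el er (size env)); [exact: leqnn | vm_compute; reflexivity]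
  end.

Lemma rule2 (R : nzRingType) (u v w : R) : u * v = w -> forall X, X * u * v = X * w.
Proof. by move=> h X; rewrite -mulrA h. Qed.

Ltac dist := repeat progress rewrite ?mulrDl ?mulrDr ?mulNr ?mulrN ?opprK ?opprD
  ?mulrA ?mulr0 ?mul0r ?addr0 ?add0r ?oppr0 ?mulr1 ?mul1r.
Ltac isimp ee ff ef fe := repeat progress rewrite ?ee ?ff ?ef ?fe ?(rule2 ee) ?(rule2 ff)
  ?(rule2 ef) ?(rule2 fe) ?mulr0 ?mul0r ?addr0 ?add0r ?oppr0.
Ltac nrm ee ff ef fe := dist; isimp ee ff ef fe; dist; isimp ee ff ef fe.
Ltac nrmH H ee ff ef fe := dist_in H; isimp_in H ee ff ef fe
with dist_in H := repeat progress rewrite ?mulrDl ?mulrDr ?mulNr ?mulrN ?opprK ?opprD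
  ?mulrA ?mulr0 ?mul0r ?addr0 ?add0r ?oppr0 ?mulr1 ?mul1r in H
with isimp_in H ee ff ef fe := repeat progress rewrite ?ee ?ff ?ef ?fe ?(rule2 ee) ?(rule2 ff)
  ?(rule2 ef) ?(rule2 fe) ?mulr0 ?mul0r ?addr0 ?add0r ?oppr0 in H.

Lemma by_zero (V : zmodType) (x y l : V) : x - y = l -> l = 0 -> x = y.
Proof. by move=> h1 h2; apply/eqP; rewrite -subr_eq0 h1 h2. Qed.

Lemma by_zeroN (V : zmodType) (x y l : V) : x - y = - l -> l = 0 -> x = y.
Proof. by move=> h1 h2; apply/eqP; rewrite -subr_eq0 h1 h2 oppr0. Qed.

Ltac byH H := first [apply: (by_zero _ H); acsolve | apply: (by_zeroN _ H); acsolve].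

Definition good (R : nzRingType) (d : R -> R) :=
  additive_map d /\
  forall A B : R, A * B = 0 -> B * A = 0 -> d A * B + B * d A + A * d B + d B * A = 0.

Lemma add0 (R : nzRingType) (d : R -> R) : additive_map d -> d 0 = 0.
Proof.
move=> h; have := h 0 0; rewrite addr0 => /(congr1 (fun z => z - d 0)).
by rewrite /= subrr addrK => <-.
Qed.

Lemma addN (R : nzRingType) (d : R -> R) : additive_map d -> forall x, d (- x) = - d x.
Proof.
move=> h x; apply/eqP; rewrite -subr_eq0 opprK -h addNr.
by rewrite (add0 h).
Qed.

Lemma addB (R : nzRingType) (d : R -> R) : additive_map d -> forall x y, d (x - y) = d x - d y.
Proof. by move=> h x y; rewrite h (addN h). Qed.



Ltac proj H u v name := pose proof (congr1 (fun z => u * z * v) H) as name;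
  rewrite /= mulr0 mul0r in name.

Lemma decomp (R : nzRingType) (e f : R) : e + f = 1 -> forall y,
  y = e*y*e + e*y*f + f*y*e + f*y*f.
Proof.
move=> hef y; have h : (e + f) * y * (e + f) = y by rewrite hef mul1r mulr1.
rewrite -{1}h; dist; acsolve.
Qed.

Lemma B11 (R : nzRingType) (d : R -> R) (e f : R) (hd : good d)
  (H2 : two_torsion_free R) (ee : e*e=e) (ff : f*f=f) (ef : e*f=0) (fe : f*e=0)
  (hef : e + f = 1) (df : d f = 0) :
  forall x, d (e*x*e) = e * d (e*x*e) * e.
Proof.
move=> x; set y := d (e*x*e).
have H := hd.2 (e*x*e) f _ _.
rewrite df mulr0 mul0r !addr0 -/y in H.
have {H}H : y * f + f * y = 0.
  apply: H; first by rewrite -mulrA ef mulr0.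
  by rewrite !mulrA fe !mul0r.
proj H f f Hff; nrmH Hff ee ff ef fe.
proj H e f Hef; nrmH Hef ee ff ef fe.
proj H f e Hfe; nrmH Hfe ee ff ef fe.
have h1 : f * y * f = 0 by apply: H2; rewrite mulr2n; byH Hff.
rewrite {1}(decomp hef y) h1 Hef Hfe; acsolve.
Qed.

Ltac zprod ee ff ef fe := nrm ee ff ef fe; first [done | acsolve].
Ltac Jap hd A B name ee ff ef fe :=
  let h1 := fresh "hz" in
  assert (h1 : A * B = 0); [ zprod ee ff ef fe | ];
  let h2 := fresh "hz" in
  assert (h2 : B * A = 0); [ zprod ee ff ef fe | ];
  pose proof (hd.2 A B h1 h2) as name; clear h1 h2.

Lemma B12 (R : nzRingType) (d : R -> R) (e f : R) (hd : good d)
  (Hprime : prime_ring R)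
  (H2 : two_torsion_free R) (ee : e*e=e) (ff : f*f=f) (ef : e*f=0) (fe : f*e=0)
  (hef : e + f = 1) (de : d e = 0) (df : d f = 0) :
  forall x, d (e*x*f) = e * d (e*x*f) * f.
Proof.
have hadd := hd.1.
move=> x; set W := d (e*x*f).
Jap hd (e*x*f) (e*x*f) H1 ee ff ef fe.
Jap hd (e + e*x*f) (f - e*x*f) H2' ee ff ef fe.
rewrite !hadd ?(addN hadd) de df -/W add0r sub0r in H2'.
proj H1 e e H1ee; nrmH H1ee ee ff ef fe.
proj H1 f f H1ff; nrmH H1ff ee ff ef fe.
proj H2' e e H2ee; nrmH H2ee ee ff ef fe.
proj H2' f f H2ff; nrmH H2ff ee ff ef fe.
have A1 : e*x*f*W*e = 0 by apply: H2; rewrite mulr2n; byH H1ee.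
have B1 : f*W*e*x*f = 0 by apply: H2; rewrite mulr2n; byH H1ff.
rewrite A1 ?B1 in H2ee H2ff.
have eWe : e*W*e = 0 by apply: H2; rewrite mulr2n; byH H2ee.
have fWf : f*W*f = 0 by apply: H2; rewrite mulr2n; byH H2ff.
have key : forall u, f*W*e*u*(e*x*f) = 0.
  move=> u.
  Jap hd (e*u*e + e*(u*e*x)*f) (f - e*x*f) H3 ee ff ef fe.
  rewrite !hadd ?(addN hadd) df -/W sub0r (B11 hd H2 ee ff ef fe hef df) in H3.
  set Y := d (e*u*e) in H3; set U := d (e*(u*e*x)*f) in H3.
  proj H3 f e C1; nrmH C1 ee ff ef fe.
  Jap hd (e*x*f) (e*(u*e*x)*f) H4 ee ff ef fe.
  rewrite -/W -/U in H4.
  proj H4 f f C2; nrmH C2 ee ff ef fe.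
  have C1' : f*U*e = f*W*e*u*e by byH C1.
  have C1'' := congr1 (fun z => z * x * f) C1'.
  rewrite /= in C1''.
  rewrite C1'' in C2.
  apply: H2; rewrite mulr2n; dist; byH C2.
have fWe : f*W*e = 0.
  case: (Hprime (f*W*e) (e*x*f) key) => // h0.
  by rewrite /W h0 (add0 hadd) mulr0 mul0r.
rewrite {1}(decomp hef W) eWe fWf fWe; acsolve.
Qed.

Definition LB (R : nzRingType) (d : R -> R) (s t : R) := d (s * t) = d s * t + s * d t.

Lemma eq_sub0 (V : zmodType) (x y : V) : x = y -> x - y = 0.
Proof. by move=> ->; rewrite subrr. Qed.

Ltac byE H := let H' := fresh "HE" in pose proof (eq_sub0 H) as H'; byH H'.

Lemma M2 (R : nzRingType) (d : R -> R) (e f : R) (hd : good d)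
  (Hprime : prime_ring R)
  (H2 : two_torsion_free R) (ee : e*e=e) (ff : f*f=f) (ef : e*f=0) (fe : f*e=0)
  (hef : e + f = 1) (de : d e = 0) (df : d f = 0) :
  forall u x, LB d (e*u*e) (e*x*f).
Proof.
have hadd := hd.1.
have b11 := B11 hd H2 ee ff ef fe hef df.
have b12 := B12 hd Hprime H2 ee ff ef fe hef de df.
move=> u x; rewrite /LB.
have -> : e*u*e*(e*x*f) = e*(u*e*x)*f by zprod ee ff ef fe.
Jap hd (e*u*e + e*(u*e*x)*f) (f - e*x*f) H ee ff ef fe.
rewrite !hadd ?(addN hadd) df sub0r in H.
have hY := b11 u; have hU := b12 (u*e*x); have hW := b12 x.
set Y := d (e*u*e) in H hY *; set U := d (e*(u*e*x)*f) in H hU *;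
set W := d (e*x*f) in H hW *.
rewrite hY hU hW in H *.
proj H e f He; nrmH He ee ff ef fe.
nrm ee ff ef fe; byH He.
Qed.

Lemma M3 (R : nzRingType) (d : R -> R) (e f : R) (hd : good d)
  (Hprime : prime_ring R)
  (H2 : two_torsion_free R) (ee : e*e=e) (ff : f*f=f) (ef : e*f=0) (fe : f*e=0)
  (hef : e + f = 1) (de : d e = 0) (df : d f = 0) :
  forall x v, LB d (e*x*f) (f*v*f).
Proof.
have hadd := hd.1.
have hfe : f + e = 1 by rewrite addrC.
have b11 := B11 hd H2 ff ee fe ef hfe de.
have b12 := B12 hd Hprime H2 ee ff ef fe hef de df.
move=> x v; rewrite /LB.
have -> : e*x*f*(f*v*f) = e*(x*f*v)*f by zprod ee ff ef fe.
Jap hd (e + e*x*f) (f*v*f - e*(x*f*v)*f) H ee ff ef fe.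
rewrite !hadd ?(addN hadd) de add0r in H.
have hZ := b11 v; have hV := b12 (x*f*v); have hW := b12 x.
set Z := d (f*v*f) in H hZ *; set V := d (e*(x*f*v)*f) in H hV *;
set W := d (e*x*f) in H hW *.
rewrite hZ hV hW in H *.
proj H e f He; nrmH He ee ff ef fe.
nrm ee ff ef fe; byH He.
Qed.

Lemma M1 (R : nzRingType) (d : R -> R) (e f : R) (hd : good d)
  (Hprime : prime_ring R)
  (H2 : two_torsion_free R) (ee : e*e=e) (ff : f*f=f) (ef : e*f=0) (fe : f*e=0)
  (hef : e + f = 1) (de : d e = 0) (df : d f = 0) (f0 : f <> 0) :
  forall u1 u2, LB d (e*u1*e) (e*u2*e).
Proof.
have hadd := hd.1.
have b11 := B11 hd H2 ee ff ef fe hef df.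
have b12 := B12 hd Hprime H2 ee ff ef fe hef de df.
have m2 := M2 hd Hprime H2 ee ff ef fe hef de df.
move=> u1 u2; rewrite /LB.
have -> : e*u1*e*(e*u2*e) = e*(u1*e*u2)*e by zprod ee ff ef fe.
have hD := b11 (u1*e*u2); have hY1 := b11 u1; have hY2 := b11 u2.
set D := d (e*(u1*e*u2)*e) in hD *; set Y1 := d (e*u1*e) in hY1 *;
set Y2 := d (e*u2*e) in hY2 *.
set del := D - (Y1 * (e*u2*e) + e*u1*e*Y2).
suff : del = 0 by move/eqP; rewrite subr_eq0 => /eqP.
have key : forall w, del * w * f = 0.
  move=> w.
  have m2a := m2 (u1*e*u2) w; have m2b := m2 u1 (u2*e*w); have m2c := m2 u2 w.
  rewrite /LB in m2a m2b m2c.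
  have eqa : e*(u1*e*u2)*e*(e*w*f) = e*(u1*e*u2*e*w)*f by zprod ee ff ef fe.
  have eqb : e*u1*e*(e*(u2*e*w)*f) = e*(u1*e*u2*e*w)*f by zprod ee ff ef fe.
  have eqc : e*u2*e*(e*w*f) = e*(u2*e*w)*f by zprod ee ff ef fe.
  rewrite eqa in m2a; rewrite eqb in m2b; rewrite eqc in m2c.
  rewrite m2a m2c in m2b.
  have hW := b12 w.
  rewrite -/D -/Y1 -/Y2 in m2b.
  set W := d (e*w*f) in m2b hW.
  rewrite hD hY1 hY2 hW in m2b.
  rewrite /del hD hY1 hY2.
  nrmH m2b ee ff ef fe; nrm ee ff ef fe.
  byE m2b.
by case: (Hprime del f key).
Qed.

Lemma M4 (R : nzRingType) (d : R -> R) (e f : R) (hd : good d)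
  (Hprime : prime_ring R)
  (H2 : two_torsion_free R) (ee : e*e=e) (ff : f*f=f) (ef : e*f=0) (fe : f*e=0)
  (hef : e + f = 1) (de : d e = 0) (df : d f = 0) :
  forall x y, LB d (e*x*f) (f*y*e).
Proof.
have hadd := hd.1.
have hfe : f + e = 1 by rewrite addrC.
have b11 := B11 hd H2 ee ff ef fe hef df.
have b11' := B11 hd H2 ff ee fe ef hfe de.
have b12 := B12 hd Hprime H2 ee ff ef fe hef de df.
have b12' := B12 hd Hprime H2 ff ee fe ef hfe df de.
move=> x y; rewrite /LB.
have -> : e*x*f*(f*y*e) = e*(x*f*y)*e by zprod ee ff ef fe.
Jap hd (e + e*x*f + f*y*e + f*(y*e*x)*f) (f - e*x*f - f*y*e + e*(x*f*y)*e) H ee ff ef fe.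
rewrite !hadd ?(addN hadd) de df ?add0r ?sub0r in H.
have hW := b12 x; have hV := b12' y; have hG := b11' (y*e*x); have hD := b11 (x*f*y).
set W := d (e*x*f) in H hW *; set V := d (f*y*e) in H hV *;
set G := d (f*(y*e*x)*f) in H hG *; set D := d (e*(x*f*y)*e) in H hD *.
rewrite hW hV hG hD in H *.
proj H e e He; nrmH He ee ff ef fe.
apply/eqP; rewrite -subr_eq0; apply/eqP; apply: H2; rewrite mulr2n.
nrm ee ff ef fe; byH He.
Qed.

Lemma LBz (R : nzRingType) (d : R -> R) (s t m1 m2 : R) : additive_map d ->
  s = s * m1 -> t = m2 * t -> m1 * m2 = 0 -> d s = d s * m1 -> d t = m2 * d t -> LB d s t.
Proof.
move=> hadd hs ht h12 hds hdt; rewrite /LB.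
have z : forall a b, a * m1 * (m2 * b) = 0.
  by move=> a b; rewrite -mulrA (mulrA m1) h12 mul0r mulr0.
have -> : s * t = 0 by rewrite hs ht z.
have -> : d s * t = 0 by rewrite hds ht z.
have -> : s * d t = 0 by rewrite hs hdt z.
by rewrite (add0 hadd) addr0.
Qed.

Lemma LB_addl (R : nzRingType) (d : R -> R) (s1 s2 t : R) : additive_map d ->
  LB d s1 t -> LB d s2 t -> LB d (s1 + s2) t.
Proof.
move=> hadd h1 h2; rewrite /LB mulrDl !hadd h1 h2; dist; acsolve.
Qed.

Lemma LB_addr (R : nzRingType) (d : R -> R) (s t1 t2 : R) : additive_map d ->
  LB d s t1 -> LB d s t2 -> LB d s (t1 + t2).
Proof.
move=> hadd h1 h2; rewrite /LB mulrDr !hadd h1 h2; dist; acsolve.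
Qed.

Lemma bfRL (R : nzRingType) (D u v : R) : D = u*D*v -> u*u = u -> v*v = v ->
  D*v = D /\ u*D = D.
Proof.
move=> h uu vv; split; rewrite h.
  by rewrite -mulrA vv.
by rewrite !mulrA uu.
Qed.

Lemma deriv_main (R : nzRingType) (d : R -> R) (e f : R) (hd : good d)
  (Hprime : prime_ring R)
  (H2 : two_torsion_free R) (ee : e*e=e) (ff : f*f=f) (ef : e*f=0) (fe : f*e=0)
  (hef : e + f = 1) (de : d e = 0) (df : d f = 0) (e0 : e <> 0) (f0 : f <> 0) :
  forall x y, LB d x y.
Proof.
have hadd := hd.1.
have hfe : f + e = 1 by rewrite addrC.
have b11 := B11 hd H2 ee ff ef fe hef df.
have b11' := B11 hd H2 ff ee fe ef hfe de.
have b12 := B12 hd Hprime H2 ee ff ef fe hef de df.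
have b12' := B12 hd Hprime H2 ff ee fe ef hfe df de.
have hee : forall x, d (e*x*e) * e = d (e*x*e) /\ e * d (e*x*e) = d (e*x*e).
  by move=> x; apply: bfRL.
have hff : forall x, d (f*x*f) * f = d (f*x*f) /\ f * d (f*x*f) = d (f*x*f).
  by move=> x; apply: bfRL.
have hef' : forall x, d (e*x*f) * f = d (e*x*f) /\ e * d (e*x*f) = d (e*x*f).
  by move=> x; apply: bfRL.
have hfe' : forall x, d (f*x*e) * e = d (f*x*e) /\ f * d (f*x*e) = d (f*x*e).
  by move=> x; apply: bfRL.
have m1 := M1 hd Hprime H2 ee ff ef fe hef de df f0.
have m1' := M1 hd Hprime H2 ff ee fe ef hfe df de e0.
have m2 := M2 hd Hprime H2 ee ff ef fe hef de df.
have m2' := M2 hd Hprime H2 ff ee fe ef hfe df de.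
have m3 := M3 hd Hprime H2 ee ff ef fe hef de df.
have m3' := M3 hd Hprime H2 ff ee fe ef hfe df de.
have m4 := M4 hd Hprime H2 ee ff ef fe hef de df.
have m4' := M4 hd Hprime H2 ff ee fe ef hfe df de.
move=> x y; rewrite (decomp hef x) (decomp hef y).
repeat (first [apply: (LB_addl hadd) | apply: (LB_addr hadd)]);
first [ exact: m1 | exact: m1' | exact: m2 | exact: m2' | exact: m3 | exact: m3'
      | exact: m4 | exact: m4'
      | apply: (@LBz _ d _ _ e f hadd);
          [ by rewrite ?(rule2 ee) ?(rule2 ff) | by rewrite !mulrA ?ee ?ff | done
          | by rewrite ?(hee _).1 ?(hff _).1 ?(hef' _).1 ?(hfe' _).1
          | by rewrite ?(hee _).2 ?(hff _).2 ?(hef' _).2 ?(hfe' _).2 ]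
      | apply: (@LBz _ d _ _ f e hadd);
          [ by rewrite ?(rule2 ee) ?(rule2 ff) | by rewrite !mulrA ?ee ?ff | done
          | by rewrite ?(hee _).1 ?(hff _).1 ?(hef' _).1 ?(hfe' _).1
          | by rewrite ?(hee _).2 ?(hff _).2 ?(hef' _).2 ?(hfe' _).2 ] ].
Qed.


Lemma idem_compl (R : nzRingType) (g : R) : g * g = g ->
  (1 - g) * (1 - g) = 1 - g /\ g * (1 - g) = 0 /\ (1 - g) * g = 0 /\ g + (1 - g) = 1.
Proof.
move=> gg; split; [|split; [|split]].
- by rewrite mulrBl mul1r mulrBr mulr1 gg subrr subr0.
- by rewrite mulrBr mulr1 gg subrr.
- by rewrite mulrBl mul1r gg subrr.
- by rewrite addrC subrK.
Qed.

Lemma ecf (R : nzRingType) (phi : R -> R) (e f : R) (hd : good phi)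
  (ee : e*e=e) (ff : f*f=f) (ef : e*f=0) (fe : f*e=0) (hef : e + f = 1) :
  e * phi 1 * f = 0.
Proof.
have hadd := hd.1.
have hf : phi f = phi 1 - phi e by rewrite -hef hadd addrC addKr.
Jap hd e f H ee ff ef fe.
rewrite hf in H.
set c := phi 1 in H *; set pe := phi e in H.
proj H e f He; nrmH He ee ff ef fe.
byH He.
Qed.

Lemma comm_idem (R : nzRingType) (phi : R -> R) (hd : good phi) (g : R) :
  g * g = g -> phi 1 * g = g * phi 1.
Proof.
move=> gg; have [ff [ef [fe hef]]] := idem_compl gg.
have h1 := ecf hd gg ff ef fe hef.
have hef' : (1 - g) + g = 1 by rewrite subrK.
have h2 := ecf hd ff gg fe ef hef'.
set c := phi 1 in h1 h2 *.
nrmH h1 gg gg gg gg; nrmH h2 gg gg gg gg.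
transitivity (g * c * g); first by byH h2.
by symmetry; byH h1.
Qed.

Lemma diag_comm (R : nzRingType) (c P Q : R) (Hprime : prime_ring R)
  (PP : P*P = P) (QQ : Q*Q = Q) (PQ : P*Q = 0) (QP : Q*P = 0) (Q0 : Q <> 0)
  (cP : c * P = P * c) (h12 : forall x, c * (P*x*Q) = P*x*Q*c) :
  forall z, c * (P*z*P) = P*z*P*c.
Proof.
move=> z.
have key : forall x, (c*(P*z*P) - P*z*P*c) * x * Q = 0.
  move=> x.
  have ha := h12 (z*P*x).
  have hb := congr1 (fun t => P * z * t) (h12 x); rewrite /= in hb.
  nrmH ha PP QQ PQ QP; nrmH hb PP QQ PQ QP.
  repeat progress rewrite ?cP ?(rule2 cP) ?mulrA in ha hb.
  nrm PP QQ PQ QP; repeat progress rewrite ?cP ?(rule2 cP) ?mulrA.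
  rewrite ha hb; acsolve.
case: (Hprime _ _ key) => // h.
by apply/eqP; rewrite -subr_eq0; apply/eqP.
Qed.

Lemma central (R : nzRingType) (phi : R -> R) (hd : good phi) (P : R)
  (Hprime : prime_ring R) (PP : P * P = P) (P0 : P <> 0) (P1 : P <> 1) :
  forall z, phi 1 * z = z * phi 1.
Proof.
have [QQ [PQ [QP hPQ]]] := idem_compl PP.
set Q := 1 - P in QQ PQ QP hPQ; clearbody Q.
have Q0 : Q <> 0 by move=> h; apply: P1; rewrite -hPQ h addr0.
have ci := comm_idem hd.
set c := phi 1 in ci *.
have cP := ci P PP; have cQ := ci Q QQ.
have h12 : forall x, c * (P*x*Q) = P*x*Q*c.
  move=> x; have hE : (P + P*x*Q) * (P + P*x*Q) = P + P*x*Q by zprod PP QQ PQ QP.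
  have := ci _ hE; rewrite mulrDr mulrDl cP; exact: addrI.
have h21 : forall x, c * (Q*x*P) = Q*x*P*c.
  move=> x; have hE : (Q + Q*x*P) * (Q + Q*x*P) = Q + Q*x*P by zprod QQ PP QP PQ.
  have := ci _ hE; rewrite mulrDr mulrDl cQ; exact: addrI.
have dP := diag_comm Hprime PP QQ PQ QP Q0 cP h12.
have dQ := diag_comm Hprime QQ PP QP PQ P0 cQ h21.
move=> z; rewrite (decomp hPQ z) !mulrDr !mulrDl dP dQ h12 h21 //.
Qed.

Lemma good_of (R : nzRingType) (phi : R -> R) :
  additive_map phi ->
  (forall A B : R, A * B = 0 -> B * A = 0 ->
            jprod (phi A) B + jprod A (phi B) = 0) -> good phi.
Proof.
move=> hadd hJ; split => // A B hAB hBA; have := hJ A B hAB hBA.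
by rewrite /jprod !addrA.
Qed.

Lemma good_shift (R : nzRingType) (phi : R -> R) (c : R) (hd : good phi)
  (hc : forall z, c * z = z * c) : good (fun X => phi X - c * X).
Proof.
have hadd := hd.1.
split.
  move=> X Y /=; rewrite hadd mulrDr; acsolve.
move=> A B hAB hBA /=.
have t1 : c*A*B = 0 by rewrite -mulrA hAB mulr0.
have t2 : B*(c*A) = 0 by rewrite mulrA -hc -mulrA hBA mulr0.
have t3 : A*(c*B) = 0 by rewrite mulrA -hc -mulrA hAB mulr0.
have t4 : c*B*A = 0 by rewrite -mulrA hBA mulr0.
rewrite !mulrBl !mulrBr t1 t2 t3 t4 !subr0.
exact: hd.2.
Qed.

Lemma good_inner (R : nzRingType) (d : R -> R) (T : R) (hd : good d) :
  good (fun X => d X - (T * X - X * T)).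
Proof.
have hadd := hd.1.
split.
  move=> X Y /=; rewrite hadd; dist; acsolve.
move=> A B hAB hBA /=.
have H := hd.2 A B hAB hBA.
nrm hAB hBA hAB hBA.
byH H.
Qed.

Lemma idem0 (R : nzRingType) (d : R -> R) (e f : R) (hd : good d)
  (H2 : two_torsion_free R) (ee : e*e=e) (ff : f*f=f) (ef : e*f=0) (fe : f*e=0)
  (hef : e + f = 1) (d1 : d 1 = 0) :
  e * d e * e = 0 /\ f * d e * f = 0.
Proof.
have hadd := hd.1.
have hf : d f = - d e by apply/eqP; rewrite -addr_eq0 addrC -hadd hef d1.
Jap hd e f H ee ff ef fe.
rewrite hf in H; set D := d e in H *.
proj H e e He; nrmH He ee ff ef fe.
proj H f f Hf; nrmH Hf ee ff ef fe.
split; apply: H2; rewrite mulr2n; [byH He | byH Hf].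
Qed.

Lemma deriv_good (R : nzRingType) (d : R -> R) (P : R) (hd : good d)
  (Hprime : prime_ring R) (H2 : two_torsion_free R)
  (PP : P * P = P) (P0 : P <> 0) (P1 : P <> 1) (d1 : d 1 = 0) :
  forall x y, LB d x y.
Proof.
have [QQ [PQ [QP hPQ]]] := idem_compl PP.
set Q := 1 - P in QQ PQ QP hPQ; clearbody Q.
have Q0 : Q <> 0 by move=> h; apply: P1; rewrite -hPQ h addr0.
have hadd := hd.1.
have [h1 h2] := idem0 hd H2 PP QQ PQ QP hPQ d1.
set D := d P in h1 h2.
set T := Q*D*P - P*D*Q.
set d0 := fun X => d X - (T * X - X * T).
have hd0 : good d0 := good_inner T hd.
have d0P : d0 P = 0.
  rewrite /d0 /T -/D {1}(decomp hPQ D); nrm PP QQ PQ QP.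
  rewrite h1 h2; acsolve.
have d01 : d0 1 = 0 by rewrite /d0 d1 mulr1 mul1r subrr subr0.
have d0Q : d0 Q = 0.
  by have := hd0.1 P Q; rewrite hPQ d01 d0P add0r.
have L0 := deriv_main hd0 Hprime H2 PP QQ PQ QP hPQ d0P d0Q P0 Q0.
move=> x y; have := L0 x y; rewrite /LB /d0 => h.
have hx : forall X, d X = (d X - (T * X - X * T)) + (T * X - X * T) by move=> X; rewrite subrK.
rewrite (hx (x*y)) (hx x) (hx y) h; dist; acsolve.
Qed.

Unset Implicit Arguments.

Theorem corollary2p9 (R : nzRingType) (P : R) (phi : R -> R)
  (Hprime : prime_ring R) (H2 : two_torsion_free R)
  (HP : P * P = P) (HP0 : P <> 0) (HP1 : P <> 1)
  (Hadd : additive_map phi)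
  (Hphi : forall A B : R, A * B = 0 -> B * A = 0 ->
            jprod (phi A) B + jprod A (phi B) = 0) :
  (exists delta eta : R -> R,
      is_derivation delta /\ is_multiplier eta /\
      forall X : R, phi X = delta X + eta X) /\
  (phi 1 = 0 -> is_derivation phi).
Proof.
have hg := good_of Hadd Hphi.
have hc := central hg Hprime HP HP0 HP1.
set c := phi 1 in hc.
have hd := good_shift hg hc.
set d := fun X => phi X - c * X in hd.
have d1 : d 1 = 0 by rewrite /d mulr1 subrr.
have Ld := deriv_good hd Hprime H2 HP HP0 HP1 d1.
have derd : is_derivation d by split; [exact: hd.1 | exact: Ld].
split.
  exists d, (fun X => c * X); split => //; split.
    split; first by move=> X Y; rewrite mulrDr.
    by move=> X; rewrite mulr1; split => //; apply: hc.
  by move=> X; rewrite /d subrK.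
move=> c0; split => // X Y.
have := Ld X Y; rewrite /LB /d /c c0 !mul0r !subr0 //.
Qed.
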